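(* There exists a $3$-subset-regular, $5$-uniform, intersecting family $\mathcal{F}\subseteq\binom{[11]}{5}$ with $$|\mathcal{F}|=66=\frac{\binom{11}{5}}{1+\binom{6}{5}\big/\binom{1}{0}},$$ i.e. attaining equality in the bound $|\mathcal{F}|\leq \binom{n}{k}\Big/\Big(1+\binom{n-k}{k}\big/\binom{n-k-s-2}{k-s-2}\Big)$ for $(n,k,s)=(11,5,3)$.
   Context: A family $\mathcal{F}\subseteq 2^{[n]}$ is $s$-subset-regular if every $s$-element subset of $[n]$ is contained in the same number of members of $\mathcal{F}$. A family is $k$-uniform if all members have size $k$, and intersecting if any two members have nonempty intersection. *)

(* Defs.v *)
From mathcomp Require Import all_boot.
Set Implicit Arguments. Unset Strict Implicit. Unset Printing Implicit Defensive.

Definition subset_regular (n s : nat) (F : {set {set 'I_n}}) : Prop :=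
  exists c : nat, forall S : {set 'I_n}, #|S| = s ->
    #|[set A in F | S \subset A]| = c.

Definition uniform (n k : nat) (F : {set {set 'I_n}}) : Prop :=
  forall A, A \in F -> #|A| = k.

Definition intersecting (n : nat) (F : {set {set 'I_n}}) : Prop :=
  forall A B, A \in F -> B \in F -> A :&: B != set0.

(* Main.v *)
Require Import Defs.
From mathcomp Require Import all_boot.

Definition Ls : seq (seq nat) := [:: [:: 0; 1; 2; 3; 5]; [:: 0; 2; 3; 6; 10]; [:: 0; 2; 3; 7; 9]; [:: 3; 4; 5; 6; 8]; [:: 2; 3; 4; 9; 10]; [:: 5; 6; 7; 8; 10]; [:: 1; 3; 4; 5; 9]; [:: 4; 5; 6; 7; 9]; [:: 0; 3; 7; 8; 10]; [:: 2; 6; 7; 9; 10]; [:: 0; 1; 2; 7; 8]; [:: 1; 7; 8; 9; 10]; [:: 1; 2; 5; 6; 7]; [:: 0; 3; 5; 8; 9]; [:: 0; 4; 5; 7; 8]; [:: 1; 2; 4; 7; 9]; [:: 0; 2; 4; 5; 9]; [:: 1; 4; 6; 7; 8]; [:: 2; 3; 4; 5; 7]; [:: 0; 1; 6; 7; 10]; [:: 2; 4; 6; 8; 9]; [:: 0; 1; 2; 6; 9]; [:: 1; 4; 6; 9; 10]; [:: 4; 5; 8; 9; 10]; [:: 0; 3; 4; 6; 9]; [:: 0; 4; 6; 8; 10]; [:: 0; 1; 3; 6; 8]; [:: 1; 5; 6; 8; 9]; [:: 1; 3; 6; 7; 9]; [:: 2; 3; 6; 7; 8]; [:: 1; 2;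 3; 7; 10]; [:: 0; 5; 6; 9; 10]; [:: 0; 1; 5; 8; 10]; [:: 2; 4; 5; 6; 10]; [:: 1; 2; 4; 5; 8]; [:: 0; 1; 4; 8; 9]; [:: 0; 3; 5; 6; 7]; [:: 1; 3; 5; 6; 10]; [:: 1; 2; 3; 8; 9]; [:: 2; 3; 5; 6; 9]; [:: 1; 2; 5; 9; 10]; [:: 2; 5; 7; 8; 9]; [:: 0; 1; 5; 7; 9]; [:: 0; 6; 7; 8; 9]; [:: 0; 2; 5; 7; 10]; [:: 3; 5; 7; 9; 10]; [:: 0; 1; 3; 4; 7]; [:: 3; 4; 6; 7; 10]; [:: 1; 4; 5; 7; 10]; [:: 0; 1; 4; 5; 6]; [:: 0; 3; 4; 5; 10]; [:: 3; 6; 8; 9; 10]; [:: 1; 2; 6; 8; 10]; [:: 0; 2; 3; 4; 8]; [:: 3; 4; 7; 8; 9]; [:: 0; 2; 5; 6; 8]; [:: 1; 3; 4; 8; 10]; [:: 1; 3; 5; 7; 8]; [:: 0; 2; 4; 6; 7]; [:: 1; 2; 3; 4; 6]; [:: 0; 4; 7; 9; 10]; [:: 2; 4; 7; 8; 10]; [:: 0; 1; 3; 9; 10]; [:: 0; 1; 2; 4; 10]; [:: 0; 2; 8; 9; 10]; [:: 2; 3; 5; 8; 10]].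

Definition setL (l : seq nat) : {set 'I_11} := [set i : 'I_11 | val i \in l].

Definition Fs : seq {set 'I_11} := map setL Ls.

Definition F0 : {set {set 'I_11}} := [set A | A \in Fs].

Definition key (l : seq nat) := [seq i <- iota 0 11 | i \in l].
Definition key' (A : {set 'I_11}) := map val [seq i <- enum 'I_11 | i \in A].

Lemma keyE l : key' (setL l) = key l.
Proof.
rewrite /key' /key -val_enum_ord [RHS]filter_map.
congr (map _ _); apply: eq_filter => i; by rewrite /setL inE.
Qed.

Lemma key_uniq : uniq (map key Ls).
Proof. vm_compute. reflexivity. Qed.

Lemma Fs_uniq : uniq Fs.
Proof.
apply: (@map_uniq _ _ key'); rewrite /Fs -map_comp.
by rewrite (eq_map keyE) key_uniq.
Qed.

Lemma card_filt_gen (s : seq {set 'I_11}) (P : pred {set 'I_11}) :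
  uniq s -> #|[set A in [set A | A \in s] | P A]| = count P s.
Proof.
move=> Us; rewrite -size_filter.
have -> : [set A in [set A | A \in s] | P A] = [set A | A \in filter P s].
  by apply/setP => A; rewrite !inE mem_filter andbC.
by rewrite cardsE; apply/card_uniqP; rewrite filter_uniq.
Qed.

Lemma card_gen (s : seq {set 'I_11}) : uniq s -> #|[set A | A \in s]| = size s.
Proof. by move=> Us; rewrite cardsE (card_uniqP Us). Qed.

Lemma card_filt (P : pred {set 'I_11}) : #|[set A in F0 | P A]| = count P Fs.
Proof. rewrite /F0; apply: card_filt_gen; exact: Fs_uniq. Qed.

Lemma card_F0 : #|F0| = 66.
Proof. rewrite /F0 (@card_gen Fs Fs_uniq). reflexivity. Qed.

Lemma card_setL l : #|setL l| = count (fun i => i \in l) (iota 0 11).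
Proof.
rewrite cardE /enum_mem -enumT size_filter -val_enum_ord count_map.
rewrite count_map enumT; by apply: eq_count => i; rewrite /= /setL inE.
Qed.

Lemma unif_nat : all (fun l => count (fun i => i \in l) (iota 0 11) == 5) Ls.
Proof. vm_compute. reflexivity. Qed.

Lemma int_nat : all (fun l1 => all (fun l2 => has (fun x => (x \in l2) && (x < 11)) l1) Ls) Ls.
Proof. vm_compute. reflexivity. Qed.

Lemma reg_nat : all (fun a => all (fun b => all (fun c =>
  [|| a == b, a == c, b == c |
   count (fun l => [&& a \in l, b \in l & c \in l]) Ls == 4])
  (iota 0 11)) (iota 0 11)) (iota 0 11).
Proof. vm_compute. reflexivity. Qed.

Lemma mem_setL (i : 'I_11) l : (i \in setL l) = (val i \in l).
Proof. by rewrite /setL inE. Qed.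

Lemma sub3 (S : {set 'I_11}) x y z l : enum S = [:: x; y; z] ->
  (S \subset setL l) = [&& val x \in l, val y \in l & val z \in l].
Proof.
move=> E; apply/subsetP/and3P.
- move=> H.
  have hx : x \in S by rewrite -mem_enum E inE eqxx.
  have hy : y \in S by rewrite -mem_enum E !inE eqxx orbT.
  have hz : z \in S by rewrite -mem_enum E !inE eqxx !orbT.
  by move: (H x hx) (H y hy) (H z hz); rewrite !mem_setL => -> -> ->.
- case=> hx hy hz i; rewrite -mem_enum E !inE.
  by case/or3P => /eqP ->.
Qed.

Lemma reg3 (S : {set 'I_11}) : #|S| = 3 -> count (fun A : {set 'I_11} => S \subset A) Fs = 4.
Proof.
rewrite cardE => HS.
have U := enum_uniq (mem S).
move: HS U; case E: (enum S) => [|x [|y [|z [|w r]]]] // _.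
rewrite [uniq _]/= !inE !negb_or => /and3P [/andP [nxy nxz] nyz _].
rewrite /Fs count_map (eq_count (a2 := fun l => [&& val x \in l, val y \in l & val z \in l])); last first.
  by move=> l; rewrite [LHS]/= (@sub3 S x y z l E).
have mI (t : 'I_11) : val t \in iota 0 11 by rewrite mem_iota ltn_ord.
have /allP/(_ (val x) (mI x)) := reg_nat.
move/allP/(_ (val y) (mI y)).
move/allP/(_ (val z) (mI z)).
by rewrite !val_eqE (negbTE nxy) (negbTE nxz) (negbTE nyz) => /eqP.
Qed.

Theorem mainTheorem12 :
  exists F : {set {set 'I_11}},
    [/\ subset_regular 3 F, uniform 5 F, intersecting F,
        #|F| = 66 &
        #|F| * (1 * 'C(1, 0) + 'C(6, 5)) = 'C(11, 5) * 'C(1, 0)].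
Proof.
exists F0; split.
- by exists 4 => S HS; rewrite card_filt reg3.
- move=> A; rewrite /F0 in_set => /mapP [l Hl ->].
  by rewrite card_setL; apply/eqP; move/allP: unif_nat; apply.
- move=> A B; rewrite /F0 !in_set => /mapP [l1 H1 ->] /mapP [l2 H2 ->].
  move/allP: int_nat => /(_ l1 H1) /allP /(_ l2 H2) /hasP [x Hx /andP [Hx2 Hlt]].
  apply/set0Pn; exists (Ordinal Hlt); by rewrite !inE /= Hx Hx2.
- exact: card_F0.
- by rewrite card_F0.
Qed.
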